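(* Let $\mathcal{H}_1,\mathcal{H}_2$ be Hilbert spaces and let $T:\mathcal{D}(T)\subseteq \mathcal{H}_1\to\mathcal{H}_2$ be a linear operator (not necessarily densely defined). Let $\mathcal{H}_T:=\overline{\mathcal{D}(T)}$ and let $T^{\times}:=(T|_{\mathcal{H}_T})^*$ be the canonical adjoint of $T$. Then $\mathcal{D}(T^{\times})=\mathcal{D}(T^* )$ (i.e. $T^\times$ has maximal domain) and $T^{\times}$ is closed. Moreover, the adjoints $S$ of $T$ with maximal domain, i.e. with $\mathcal{D}(S)=\mathcal{D}(T^* )$, are exactly the operators of the form $S=T^{\times}+U$, where $U:\mathcal{D}(T^{\times})\to\mathcal{H}_T^{\perp}$ is an arbitrary linear operator. In particular, $\|T^{\times}x\|\le\|Sx\|$ for every such adjoint $S$ and all $x\in\mathcal{D}(T^{\times})$.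
   Context: For a linear operator $T:\mathcal{D}(T)\subseteq\mathcal{H}_1\to\mathcal{H}_2$ with arbitrary domain, set $\mathcal{D}(T^* )=\{k\in\mathcal{H}_2:\ h\mapsto\langle Th,k\rangle \text{ is a bounded functional on } \mathcal{D}(T)\}$. A linear operator $S:\mathcal{D}(S)\subseteq\mathcal{H}_2\to\mathcal{H}_1$ is called an adjoint of $T$ if $\langle Th,k\rangle=\langle h,Sk\rangle$ for all $h\in\mathcal{D}(T)$, $k\in\mathcal{D}(S)$ (then necessarily $\mathcal{D}(S)\subseteq\mathcal{D}(T^* )$). $T|_{\mathcal{H}_T}$ denotes $T$ regarded as a densely defined operator from $\mathcal{D}(T)\subseteq\mathcal{H}_T$ into $\mathcal{H}_2$, and $(T|_{\mathcal{H}_T})^*:\mathcal{D}\subseteq\mathcal{H}_2\to\mathcal{H}_T\subseteq\mathcal{H}_1$ is its usual (unique) Hilbert space adjoint. *)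

(* Defs.v *)
(* Hilbert spaces are encoded as an lmodType over R[i] with an inner product
   (linear in the first argument, conjugate-linear in the second) that is
   complete for the induced norm.  Subsets are predicates V -> Prop; a
   (not necessarily everywhere defined) linear operator is a pair of a
   domain D (a linear subspace) and a function that is linear on D. *)
From mathcomp Require Import all_boot all_algebra.
From mathcomp Require Import reals complex.
From Stdlib Require Import ClassicalEpsilon.
Set Implicit Arguments. Unset Strict Implicit. Unset Printing Implicit Defensive.
Import GRing.Theory Num.Theory.
Local Open Scope ring_scope.

Section Hilbert.
Variable R : realType.
Local Notation C := (R[i]).

Section OneSpace.
Variable V : lmodType C.
Variable ip : V -> V -> C.

Definition inner_product : Prop :=
  [/\ (forall (a : C) (x y z : V), ip (a *: x + y) z = a * ip x z + ip y z),
      (forall x y : V, ip y x = Num.conj (ip x y)),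
      (forall x : V, 0 <= ip x x) &
      (forall x : V, ip x x = 0 -> x = 0)].

(* induced norm (a nonnegative real, viewed in C) *)
Definition vnorm (x : V) : C := sqrtC (ip x x).

Definition converges (u : nat -> V) (x : V) : Prop :=
  forall e : C, 0 < e -> exists N : nat, forall n, (N <= n)%N -> vnorm (u n - x) < e.

Definition cauchy_seq (u : nat -> V) : Prop :=
  forall e : C, 0 < e -> exists N : nat,
    forall m n, (N <= m)%N -> (N <= n)%N -> vnorm (u m - u n) < e.

Definition hilbert : Prop :=
  inner_product /\ forall u, cauchy_seq u -> exists x, converges u x.

Definition linear_subspace (D : V -> Prop) : Prop :=
  D 0 /\ forall (a : C) x y, D x -> D y -> D (a *: x + y).

Definition vclosure (D : V -> Prop) : V -> Prop :=
  fun x => exists u : nat -> V, (forall n, D (u n)) /\ converges u x.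

Definition orth (D : V -> Prop) : V -> Prop :=
  fun x => forall y, D y -> ip y x = 0.
End OneSpace.

Section Operators.
Variables (V1 V2 : lmodType C) (ip1 : V1 -> V1 -> C) (ip2 : V2 -> V2 -> C).

Definition linear_on (W1 W2 : lmodType C) (D : W1 -> Prop) (f : W1 -> W2) : Prop :=
  forall (a : C) x y, D x -> D y -> f (a *: x + y) = a *: f x + f y.

Definition adj_dom (D : V1 -> Prop) (T : V1 -> V2) : V2 -> Prop :=
  fun k => exists M : C, forall h, D h -> `|ip2 (T h) k| <= M * vnorm ip1 h.

Definition is_adjoint (D : V1 -> Prop) (T : V1 -> V2)
    (DS : V2 -> Prop) (S : V2 -> V1) : Prop :=
  [/\ linear_subspace DS, linear_on DS S &
      forall h k, D h -> DS k -> ip2 (T h) k = ip1 h (S k)].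

Definition closed_op (W1 W2 : lmodType C) (n1 : W1 -> W1 -> C) (n2 : W2 -> W2 -> C)
    (DS : W1 -> Prop) (S : W1 -> W2) : Prop :=
  forall (u : nat -> W1) x y, (forall n, DS (u n)) ->
    converges n1 u x -> converges n2 (fun n => S (u n)) y -> DS x /\ S x = y.

(* The canonical adjoint T^x := (T|_{H_T})^*, H_T = vclosure of D(T):
   the usual Hilbert-space adjoint of the densely defined operator
   T : D(T) subset H_T -> H2. *)
Definition canon_adj_dom (D : V1 -> Prop) (T : V1 -> V2) : V2 -> Prop :=
  fun k => exists y, vclosure ip1 D y /\ forall h, D h -> ip2 (T h) k = ip1 h y.

Definition canon_adj (D : V1 -> Prop) (T : V1 -> V2) (k : V2) : V1 :=
  epsilon (inhabits 0)
    (fun y => vclosure ip1 D y /\ forall h, D h -> ip2 (T h) k = ip1 h y).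
End Operators.
End Hilbert.

(* Main.v *)
Require Import Defs.
From mathcomp Require Import all_boot all_order all_algebra.
From mathcomp Require Import reals complex.
From mathcomp Require Import ring lra.
From Stdlib Require Import ClassicalEpsilon.
Set Implicit Arguments. Unset Strict Implicit. Unset Printing Implicit Defensive.
Import Order.TTheory GRing.Theory Num.Theory.
Local Open Scope ring_scope.

Section Basic.
Variable R : realType.
Local Notation C := (R[i]).
Variable V : lmodType C.
Variable ip : V -> V -> C.
Hypothesis Hip : inner_product ip.

Lemma ipDl x y z : ip (x + y) z = ip x z + ip y z.
Proof. case: Hip => H _ _ _. have := H 1 x y z. rewrite scale1r mul1r. done. Qed.
Lemma ipZl a x z : ip (a *: x) z = a * ip x z.
Proof. case: Hip => H _ _ _. have := H a x 0 z. rewrite addr0 => ->. have := H 1 0 0 z. rewrite scale1r addr0 mul1r => h. have : ip 0 z + 0 = ip 0 z + ip 0 z by rewrite addr0. move/addrI => <-. by rewrite addr0. Qed.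
Lemma ipC x y : ip y x = (ip x y)^*.
Proof. by case: Hip. Qed.
Lemma ip0l z : ip 0 z = 0.
Proof. by rewrite -(scale0r 0) ipZl mul0r. Qed.
Lemma ipNl x z : ip (- x) z = - ip x z.
Proof. by rewrite -scaleN1r ipZl mulN1r. Qed.
Lemma ipBl x y z : ip (x - y) z = ip x z - ip y z.
Proof. by rewrite ipDl ipNl. Qed.
Lemma ipDr x y z : ip z (x + y) = ip z x + ip z y.
Proof. by rewrite ipC ipDl rmorphD /= -!ipC. Qed.
Lemma ipZr a x z : ip z (a *: x) = a^* * ip z x.
Proof. by rewrite ipC ipZl rmorphM /= -!ipC. Qed.
Lemma ip0r z : ip z 0 = 0.
Proof. by rewrite ipC ip0l rmorph0 /=. Qed.
Lemma ipNr x z : ip z (- x) = - ip z x.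
Proof. by rewrite ipC ipNl rmorphN /= -ipC. Qed.
Lemma ipBr x y z : ip z (x - y) = ip z x - ip z y.
Proof. by rewrite ipDr ipNr. Qed.
Lemma ip_ge0 x : 0 <= ip x x.
Proof. by case: Hip => _ _ H _; apply: H. Qed.
Lemma ip_eq0 x : ip x x = 0 -> x = 0.
Proof. by case: Hip => _ _ _; apply. Qed.
Lemma ip_real x : ip x x \is Num.real.
Proof. exact: ger0_real (ip_ge0 x). Qed.
Lemma ip_conj_self x : (ip x x)^* = ip x x.
Proof. exact: geC0_conj (ip_ge0 x). Qed.

Lemma vnorm_ge0 x : 0 <= vnorm ip x.
Proof. by rewrite /vnorm sqrtC_ge0 ip_ge0. Qed.
Lemma vnorm_sq x : vnorm ip x ^+ 2 = ip x x.
Proof. by rewrite /vnorm sqrtCK. Qed.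
Lemma vnorm_real x : vnorm ip x \is Num.real.
Proof. exact: ger0_real (vnorm_ge0 x). Qed.

Lemma CS2 x y : `|ip x y| ^+ 2 <= ip x x * ip y y.
Proof.
have [y0|ny0] := eqVneq y 0.
  by rewrite y0 ip0r normr0 expr0n /= ip0r mulr0.
have yp : 0 < ip y y.
  by rewrite lt_def ip_ge0 andbT; apply/eqP => /ip_eq0; apply/eqP.
set a := ip x y; set b := ip y y.
set t := a / b.
have bn0 : b != 0 by rewrite gt_eqF.
have E : ip (x - t *: y) (x - t *: y) = ip x x - (`|a| ^+ 2) / b.
  rewrite ipBl !ipBr !ipZl !ipZr normCK.
  have -> : ip y x = a^* by rewrite ipC.
  rewrite /t rmorphM /= fmorphV /= ip_conj_self -/a -/b.
  by field.
have := ip_ge0 (x - t *: y); rewrite E subr_ge0.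
by rewrite ler_pdivrMr.
Qed.

Lemma CS x y : `|ip x y| <= vnorm ip x * vnorm ip y.
Proof.
rewrite -(@ler_pXn2r _ 2) //; last 2 first.
- by rewrite nnegrE.
- by rewrite nnegrE mulr_ge0 // vnorm_ge0.
by rewrite exprMn !vnorm_sq CS2.
Qed.

Lemma vnorm0 : vnorm ip 0 = 0.
Proof. by rewrite /vnorm ip0l sqrtC0. Qed.
Lemma vnorm_eq0 x : vnorm ip x = 0 -> x = 0.
Proof. by move=> /eqP; rewrite /vnorm sqrtC_eq0 => /eqP /ip_eq0. Qed.
Lemma vnormZ a x : vnorm ip (a *: x) = `|a| * vnorm ip x.
Proof.
rewrite /vnorm ipZl ipZr mulrA -normCK sqrtCM ?nnegrE ?exprn_ge0 ?ip_ge0 //.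
by rewrite sqrCK.
Qed.
Lemma vnormN x : vnorm ip (- x) = vnorm ip x.
Proof. by rewrite -scaleN1r vnormZ normrN1 mul1r. Qed.
Lemma vnormB x y : vnorm ip (x - y) = vnorm ip (y - x).
Proof. by rewrite -vnormN opprB. Qed.

Lemma sq_le (a b : C) : 0 <= a -> 0 <= b -> a ^+ 2 <= b ^+ 2 -> a <= b.
Proof. by move=> a0 b0; rewrite ler_pXn2r // nnegrE. Qed.

Lemma Re2_le (z : C) : z + z^* <= 2%:R * `|z|.
Proof.
have h := (leif_Re_Creal z).1.
have -> : z + z^* = 2%:R * 'Re z by rewrite ReE mulrC mulfVK // pnatr_eq0.
by rewrite ler_pM2l // ltr0n.
Qed.

Lemma vnormD x y : vnorm ip (x + y) <= vnorm ip x + vnorm ip y.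
Proof.
apply: sq_le; rewrite ?vnorm_ge0 ?addr_ge0 ?vnorm_ge0 //.
rewrite vnorm_sq sqrrD !vnorm_sq ipDl !ipDr.
have -> : ip y x = (ip x y)^* by rewrite ipC.
have e : ip x x + ip x y + ((ip x y)^* + ip y y) = ip x x + ip y y + (ip x y + (ip x y)^*) by ring.
rewrite e.
have -> : ip x x + vnorm ip x * vnorm ip y *+ 2 + ip y y = ip x x + ip y y + 2%:R * (vnorm ip x * vnorm ip y) by ring.
rewrite lerD2l.
apply: (le_trans (Re2_le _)).
by rewrite ler_pM2l ?ltr0n // CS.
Qed.

Lemma archC (e : C) : 0 < e -> exists N, forall n, (N <= n)%N -> (n.+1%:R)^-1 < e.
Proof.
move=> e0.
have er : e \is Num.real by apply: gtr0_real.
have ee := RRe_real er.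
set r := complex.Re e in ee.
have r0 : 0 < r by rewrite -ltcR ee.
exists (Num.bound (r^-1)) => n hn.
have h1 : r^-1 < (n.+1)%:R.
  apply: (lt_le_trans (archi_boundP _)); first by rewrite invr_ge0 ltW.
  by rewrite ler_nat (leq_trans hn).
have h2 : (n.+1%:R)^-1 < r.
  by rewrite -(invrK r) ltf_pV2 // posrE ?invr_gt0 // ltr0n.
rewrite -ee.
have -> : (n.+1%:R : C)^-1 = ((n.+1%:R : R)^-1)%:C%C.
  by rewrite fmorphV rmorph_nat.
by rewrite ltcR.
Qed.


Lemma small0 (a : C) : 0 <= a -> (forall e, 0 < e -> a < e) -> a = 0.
Proof.
move=> a0 h; apply/eqP; apply: contraT => an0.
have ap : 0 < a by rewrite lt_def an0 a0.
by have := h a ap; rewrite ltxx.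
Qed.

Lemma small_mul (c w e : C) : 0 <= c -> 0 <= w -> w < e / (c + 1) -> c * w < e.
Proof.
move=> c0 w0; have c1 : 0 < c + 1 by rewrite ltr_wpDl.
rewrite ltr_pdivlMr // => h; apply: le_lt_trans h.
by rewrite mulrDr mulr1 mulrC lerDl.
Qed.

Lemma half_lt (a b e : C) : a < e / 2%:R -> b < e / 2%:R -> a + b < e.
Proof. by move=> ha hb; rewrite (splitr e) ltrD. Qed.

Lemma cvg_const x : converges ip (fun _ => x) x.
Proof. by move=> e e0; exists 0%N => n _; rewrite subrr vnorm0. Qed.

Lemma cvg_add u v x y : converges ip u x -> converges ip v y ->
  converges ip (fun n => u n + v n) (x + y).
Proof.
move=> hu hv e e0.
have e2 : 0 < e / 2%:R by rewrite divr_gt0 // ltr0n.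
have [N1 h1] := hu _ e2; have [N2 h2] := hv _ e2.
exists (maxn N1 N2) => n hn.
have -> : u n + v n - (x + y) = (u n - x) + (v n - y) by rewrite opprD addrACA.
apply: le_lt_trans (vnormD _ _) _.
apply: half_lt; [apply: h1 | apply: h2]; apply: leq_trans hn;
  by rewrite ?leq_maxl ?leq_maxr.
Qed.

Lemma cvg_scale a u x : converges ip u x ->
  converges ip (fun n => a *: u n) (a *: x).
Proof.
move=> hu e e0.
have e2 : 0 < e / (`|a| + 1) by rewrite divr_gt0 // ltr_wpDl.
have [N h] := hu _ e2; exists N => n hn.
by rewrite -scalerBr vnormZ small_mul ?vnorm_ge0 // h.
Qed.

Lemma cvg_unique u x y : converges ip u x -> converges ip u y -> x = y.
Proof.
move=> hx hy; apply/eqP; rewrite -subr_eq0; apply/eqP; apply: vnorm_eq0.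
apply: small0; first exact: vnorm_ge0.
move=> e e0.
have e2 : 0 < e / 2%:R by rewrite divr_gt0 // ltr0n.
have [N1 h1] := hx _ e2; have [N2 h2] := hy _ e2.
have -> : x - y = (x - u (maxn N1 N2)) + (u (maxn N1 N2) - y) by rewrite addrA subrK.
apply: le_lt_trans (vnormD _ _) _.
by apply: half_lt; [rewrite vnormB; apply: h1 | apply: h2]; rewrite ?leq_maxl ?leq_maxr.
Qed.

Lemma cvg_ipl u x z : converges ip u x -> forall e, 0 < e ->
  exists N, forall n, (N <= n)%N -> `|ip (u n) z - ip x z| < e.
Proof.
move=> hu e e0.
have e2 : 0 < e / (vnorm ip z + 1) by rewrite divr_gt0 // ltr_wpDl ?vnorm_ge0.
have [N h] := hu _ e2; exists N => n hn.
rewrite -ipBl; apply: le_lt_trans (CS _ _) _.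
by rewrite mulrC small_mul ?vnorm_ge0 // h.
Qed.

Lemma cvg_ipr u x z : converges ip u x -> forall e, 0 < e ->
  exists N, forall n, (N <= n)%N -> `|ip z (u n) - ip z x| < e.
Proof.
move=> hu e e0.
have e2 : 0 < e / (vnorm ip z + 1) by rewrite divr_gt0 // ltr_wpDl ?vnorm_ge0.
have [N h] := hu _ e2; exists N => n hn.
rewrite -ipBr; apply: le_lt_trans (CS _ _) _.
by rewrite small_mul ?vnorm_ge0 // h.
Qed.


Lemma cl_sub (D : V -> Prop) x : D x -> vclosure ip D x.
Proof. by move=> Dx; exists (fun _ => x); split => //; apply: cvg_const. Qed.

Lemma cl_lin (D : V -> Prop) : linear_subspace D -> linear_subspace (vclosure ip D).
Proof.
case=> D0 DL; split; first exact: cl_sub.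
move=> a x y [u [Du hu]] [v [Dv hv]].
exists (fun n => a *: u n + v n); split; first by move=> n; apply: DL.
by apply: cvg_add => //; apply: cvg_scale.
Qed.

Lemma cl_closed (D : V -> Prop) x : vclosure ip (vclosure ip D) x -> vclosure ip D x.
Proof.
move=> [u [Du hu]].
pose P n v := D v /\ vnorm ip (v - u n) < (n.+1%:R)^-1.
have ex n : exists v, P n v.
  have [w [Dw hw]] := Du n.
  have [N hN] := hw (n.+1%:R^-1) (ltac:(by rewrite invr_gt0 ltr0n)).
  by exists (w N); split => //; apply: hN.
pose v n := epsilon (inhabits 0) (P n).
have hv n : P n (v n) by apply: epsilon_spec.
exists v; split; first by move=> n; case: (hv n).
move=> e e0.
have e2 : 0 < e / 2%:R by rewrite divr_gt0 // ltr0n.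
have [N1 h1] := archC e2; have [N2 h2] := hu _ e2.
exists (maxn N1 N2) => n hn.
have -> : v n - x = (v n - u n) + (u n - x) by rewrite addrA subrK.
apply: le_lt_trans (vnormD _ _) _.
apply: half_lt.
  case: (hv n) => _ h; apply: lt_trans h _; apply: h1.
  by apply: leq_trans hn; rewrite leq_maxl.
by apply: h2; apply: leq_trans hn; rewrite leq_maxr.
Qed.

Lemma orth_cl (D : V -> Prop) z y : (forall h, D h -> ip h z = 0) ->
  vclosure ip D y -> ip y z = 0.
Proof.
move=> hD [u [Du hu]]; apply/eqP; rewrite -normr_eq0; apply/eqP.
apply: small0 => // e e0.
have [N hN] := cvg_ipl z hu e0.
by have := hN N (leqnn N); rewrite hD // sub0r normrN.
Qed.

Lemma orth_cl_r (D : V -> Prop) z y : (forall h, D h -> ip z h = 0) ->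
  vclosure ip D y -> ip z y = 0.
Proof.
move=> hD hy; rewrite ipC (@orth_cl D) ?rmorph0 // => h Dh.
by rewrite ipC hD // rmorph0.
Qed.


Lemma var_ineq (phz inf sg P q : C) : 0 < sg -> sg <= 1 -> 0 <= P -> 0 <= q ->
  let s := sg / (1 + P) in
  inf <= phz - 2%:R * s * q + s ^+ 2 * q * P -> phz < inf + sg ^+ 2 ->
  q < sg * (1 + P).
Proof.
move=> sg0 sg1 P0 q0 s h1 h2.
have P1 : 0 < 1 + P by rewrite ltr_pwDl.
have s0 : 0 < s by rewrite divr_gt0.
have h3 : 2%:R * s * q - s ^+ 2 * q * P < sg ^+ 2.
  have : phz - sg ^+ 2 < phz - (2%:R * s * q - s ^+ 2 * q * P).
    have -> : phz - (2%:R * s * q - s ^+ 2 * q * P) = phz - 2%:R * s * q + s ^+ 2 * q * P by ring.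
    apply: lt_le_trans h1.
    by rewrite ltrBlDr.
  by rewrite ltrD2l ltrN2.
have sP : s * P <= 1.
  rewrite /s mulrAC ler_pdivrMr // mul1r.
  apply: le_trans (_ : P <= _); last by rewrite lerDr.
  by rewrite ler_piMl.
have h4 : s * q <= 2%:R * s * q - s ^+ 2 * q * P.
  rewrite -subr_ge0.
  have -> : 2%:R * s * q - s ^+ 2 * q * P - s * q = (s * q) * (1 - s * P) by ring.
  by rewrite mulr_ge0 // ?subr_ge0 // mulr_ge0 // ltW.
have h5 : s * q < sg ^+ 2 by apply: le_lt_trans h4 h3.
have -> : sg * (1 + P) = sg ^+ 2 / s.
  rewrite /s; field; rewrite gt_eqF //; by rewrite gt_eqF.
by rewrite ltr_pdivlMr // mulrC.
Qed.


Lemma cau_arith (a b c i dp dq e : C) : a < i + dp -> b < i + dq -> i <= c ->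
  dp < e / 4%:R -> dq < e / 4%:R -> 2%:R * a + 2%:R * b - 4%:R * c < e.
Proof.
move=> ha hb hc hp hq.
have h2 : 0 < 2%:R :> C by rewrite ltr0n.
have h4 : 0 < 4%:R :> C by rewrite ltr0n.
have s1 : 2%:R * a + 2%:R * b < 2%:R * (i + dp) + 2%:R * (i + dq).
  by rewrite ltrD // ltr_pM2l.
have s2 : - (4%:R * c) <= - (4%:R * i) by rewrite lerN2 ler_pM2l.
apply: lt_le_trans (ltr_leD s1 s2) _.
have -> : 2%:R * (i + dp) + 2%:R * (i + dq) - 4%:R * i = 2%:R * (dp + dq) by ring.
have : dp + dq < e / 2%:R.
  apply: lt_le_trans (ltrD hp hq) _.
  have -> : e / 4%:R + e / 4%:R = e / 2%:R by field.
  done.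
by rewrite ltr_pdivlMr // mulrC => /ltW.
Qed.

Lemma riesz (Hc : forall u, cauchy_seq ip u -> exists x, converges ip u x)
    (D : V -> Prop) (f : V -> C) (M : C) :
  linear_subspace D -> (forall a x y, D x -> D y -> f (a *: x + y) = a * f x + f y) ->
  (forall h, D h -> `|f h| <= M * vnorm ip h) ->
  exists y, vclosure ip D y /\ forall h, D h -> f h = ip h y.
Proof.
move=> [D0 DL] hf hM.
have f0 : f 0 = 0.
  have := hf 1 0 0 D0 D0; rewrite scale1r addr0 mul1r => h.
  have : f 0 + 0 = f 0 + f 0 by rewrite addr0.
  by move/addrI => <-.
have fD x y : D x -> D y -> f (x + y) = f x + f y.
  by move=> Dx Dy; rewrite -{1}(scale1r x) hf // mul1r.
have fZ a x : D x -> f (a *: x) = a * f x.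
  by move=> Dx; rewrite -(addr0 (a *: x)) hf // f0 addr0.
have DD x y : D x -> D y -> D (x + y).
  by move=> Dx Dy; rewrite -(scale1r x); apply: DL.
have DZ a x : D x -> D (a *: x).
  by move=> Dx; rewrite -(addr0 (a *: x)); apply: DL.
set m := `|M|.
have m0 : 0 <= m by apply: normr_ge0.
have hm h : D h -> `|f h| <= m * vnorm ip h.
  move=> Dh; apply: le_trans (hM h Dh) _.
  have r : M * vnorm ip h \is Num.real.
    by apply: ger0_real; apply: le_trans (hM h Dh).
  by apply: le_trans (real_ler_norm r) _; rewrite normrM (ger0_norm (vnorm_ge0 _)).
pose Phi z := ip z z - (f z + (f z)^*).
have Phi_real z : Phi z \is Num.real.
  rewrite /Phi rpredB ?ip_real //.
  by rewrite CrealE rmorphD /= conjCK addrC.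
have Phi_lb z : D z -> - m ^+ 2 <= Phi z.
  move=> Dz.
  apply: le_trans (_ : - m ^+ 2 <= vnorm ip z ^+ 2 - 2%:R * (m * vnorm ip z)) _.
    rewrite -subr_ge0.
    have -> : vnorm ip z ^+ 2 - 2%:R * (m * vnorm ip z) - - m ^+ 2 = (vnorm ip z - m) ^+ 2 by ring.
    by apply: real_exprn_even_ge0 => //; rewrite rpredB ?vnorm_real ?normr_real.
  rewrite /Phi -vnorm_sq lerD2l lerN2.
  apply: le_trans (Re2_le _) _.
  by rewrite ler_pM2l ?ltr0n // hm.
pose phr z := complex.Re (Phi z).
have phrE z : ((phr z)%:C)%C = Phi z by apply: RRe_real.
pose E : classical_sets.set R := fun r => exists z, D z /\ r = - phr z.
pose b := complex.Re (m ^+ 2).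
have bE : (b%:C)%C = m ^+ 2 by apply: RRe_real; rewrite rpredX // normr_real.
have hsup : classical_sets.has_sup E.
  split; first by exists (- phr 0); exists 0.
  exists b => r [z [Dz ->]].
  by rewrite -lecR bE rmorphN /= phrE lerNl Phi_lb.
set s := reals.sup E.
have P1 z : D z -> - (s%:C)%C <= Phi z.
  move=> Dz.
  have := reals.sup_upper_bound hsup (ex_intro _ z (conj Dz erefl)).
  by rewrite lerNl -lecR rmorphN /= phrE.
pose sg (n : nat) : C := (n.+1%:R)^-1.
have sg0 n : 0 < sg n by rewrite invr_gt0 ltr0n.
have sg1 n : sg n <= 1 by rewrite invf_le1 ?ltr0n // ler1n.
have P2 n : exists z, D z /\ Phi z < - (s%:C)%C + sg n ^+ 2.
  have eps0 : 0 < ((n.+1%:R : R)^-1) ^+ 2 by rewrite exprn_gt0 // invr_gt0 ltr0n.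
  have [r [z [Dz ->]] hr] := reals.sup_adherent eps0 hsup.
  exists z; split => //.
  have hr' : phr z < - s + ((n.+1%:R : R)^-1) ^+ 2.
    by move: hr; rewrite ltrNr opprB addrC.
  rewrite -phrE.
  have -> : sg n ^+ 2 = ((((n.+1%:R : R)^-1) ^+ 2)%:C)%C.
    by rewrite rmorphXn fmorphV rmorph_nat.
  by rewrite -rmorphN -rmorphD ltcR.
pose z n := epsilon (inhabits 0) (fun z => D z /\ Phi z < - (s%:C)%C + sg n ^+ 2).
have hz n : D (z n) /\ Phi (z n) < - (s%:C)%C + sg n ^+ 2.
  exact: (epsilon_spec (inhabits 0) _ (P2 n)).
have c2 : ((2%:R : C)^-1)^* = (2%:R)^-1 by rewrite fmorphV /= conjC_nat.
have mid a c : D a -> D c -> ip (a - c) (a - c) =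
    2%:R * Phi a + 2%:R * Phi c - 4%:R * Phi ((2%:R)^-1 *: (a + c)).
  move=> Da Dc; rewrite /Phi /= fZ; last exact: DD.
  rewrite fD // ipZl !ipZr !ipDl !ipDr !ipNl !ipNr.
  rewrite rmorphM /= c2 rmorphD /=.
  by field.
have cau : cauchy_seq ip z.
  move=> e e0.
  have e4 : 0 < e ^+ 2 / 4%:R by rewrite divr_gt0 ?exprn_gt0 // ltr0n.
  have [N hN] := archC e4.
  exists N => p q hp hq.
  have ipl : ip (z p - z q) (z p - z q) < e ^+ 2.
    have [Dp lp] := hz p; have [Dq lq] := hz q.
    rewrite mid //; apply: (cau_arith lp lq).
    - by apply: P1; apply: DZ; apply: DD.
    - apply: le_lt_trans (hN _ hp); rewrite expr2; exact: ler_piMl (ltW (sg0 p)) (sg1 p).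
    - apply: le_lt_trans (hN _ hq); rewrite expr2; exact: ler_piMl (ltW (sg0 q)) (sg1 q).
  rewrite /vnorm -(sqrCK (ltW e0)) ltr_sqrtC // nnegrE ?ip_ge0 //.
  by rewrite exprn_ge0 // ltW.
have [y hy] := Hc z cau.
exists y; split; first by exists z; split => // n; case: (hz n).
move=> h Dh.
set P := ip h h.
have P0 : 0 <= P by apply: ip_ge0.
pose g w := ip h w - f h.
have var_id t w : D w -> Phi (t *: h + w) = Phi w + (t * g w + (t * g w)^*) + t * t^* * P.
  move=> Dw; rewrite /Phi /g hf //.
  rewrite !ipDl !ipDr !ipZl !ipZr (ipC h w).
  rewrite !rmorphD !rmorphM /= !rmorphB /=.
  by rewrite /P; ring.
have qbound n : g (z n) * (g (z n))^* < sg n * (1 + P).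
  have [Dn ln] := hz n.
  set q := g (z n) * (g (z n))^*.
  have q0 : 0 <= q by apply: mul_conjC_ge0.
  set ss := sg n / (1 + P).
  have ss0 : 0 <= ss by rewrite divr_ge0 // ?addr_ge0 // ltW.
  apply: (var_ineq (sg0 n) (sg1 n) P0 q0 _ ln).
  have := P1 _ (DL (- (ss * (g (z n))^*)) h (z n) Dh Dn).
  rewrite var_id //.
  have -> : - (ss * (g (z n))^*) * g (z n) = - (ss * q) by rewrite /q; ring.
  rewrite rmorphN rmorphM /= (geC0_conj ss0) (geC0_conj q0).
  rewrite rmorphN rmorphM /= (geC0_conj ss0) conjCK.
  have -> : Phi (z n) + (- (ss * q) + - (ss * q)) + - (ss * (g (z n))^*) * - (ss * g (z n)) * P
     = Phi (z n) - 2%:R * ss * q + ss ^+ 2 * q * P by rewrite /q; ring.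
  done.
apply/eqP; rewrite -subr_eq0 -normr_eq0; apply/eqP.
apply: small0 => // e e0.
have e2 : 0 < e / 2%:R by rewrite divr_gt0 // ltr0n.
have [N1 h1] := cvg_ipr h hy e2.
have e3 : 0 < (e / 2%:R) ^+ 2 / (1 + P) by rewrite divr_gt0 ?exprn_gt0 // ltr_pwDl.
have [N2 h2] := archC e3.
set n := maxn N1 N2.
have hn1 := h1 n (leq_maxl _ _).
have hn2 := h2 n (leq_maxr _ _).
have hg : `|g (z n)| < e / 2%:R.
  rewrite -(@ltr_pXn2r _ 2) // ?nnegrE ?normr_ge0 ?ltW // normCK.
  apply: lt_trans (qbound n) _.
  by rewrite -ltr_pdivlMr // ltr_pwDl.
have -> : f h - ip h y = (ip h (z n) - ip h y) - g (z n) by rewrite /g; ring.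
apply: le_lt_trans (ler_normB _ _) _.
exact: half_lt.
Qed.

End Basic.

Lemma climit_unique (R : realType) (a : nat -> R[i]) (al be : R[i]) :
  (forall e, 0 < e -> exists N, forall n, (N <= n)%N -> `|a n - al| < e) ->
  (forall e, 0 < e -> exists N, forall n, (N <= n)%N -> `|a n - be| < e) -> al = be.
Proof.
move=> ha hb; apply/eqP; rewrite -subr_eq0 -normr_eq0; apply/eqP.
apply: small0 => // e e0.
have e2 : 0 < e / 2%:R by rewrite divr_gt0 // ltr0n.
have [N1 h1] := ha _ e2; have [N2 h2] := hb _ e2.
have -> : al - be = - (a (maxn N1 N2) - al) + (a (maxn N1 N2) - be) by rewrite opprB addrA subrK.
apply: le_lt_trans (ler_normD _ _) _.
by apply: half_lt; [rewrite normrN; apply: h1 | apply: h2]; rewrite ?leq_maxl ?leq_maxr.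
Qed.

From Stdlib Require Import FunctionalExtensionality PropExtensionality.

Theorem theorem3p2 (R : realType) (V1 V2 : lmodType R[i])
    (ip1 : V1 -> V1 -> R[i]) (ip2 : V2 -> V2 -> R[i])
    (D : V1 -> Prop) (T : V1 -> V2) :
  hilbert ip1 -> hilbert ip2 ->
  linear_subspace D -> linear_on D T ->
  let Dx := canon_adj_dom ip1 ip2 D T in
  let Tx := canon_adj ip1 ip2 D T in
  (* D(T^x) = D(T^* ) *)
  Dx = adj_dom ip1 ip2 D T /\
  (* T^x is closed *)
  closed_op ip2 ip1 Dx Tx /\
  (* T^x is an adjoint of T *)
  is_adjoint ip1 ip2 D T Dx Tx /\
  (* adjoints with maximal domain are exactly T^x + U, U : D(T^x) -> H_T^perp linear *)
  (forall (S : V2 -> V1),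
     is_adjoint ip1 ip2 D T (adj_dom ip1 ip2 D T) S <->
     exists U : V2 -> V1,
       [/\ linear_on Dx U,
           (forall x, Dx x -> orth ip1 (vclosure ip1 D) (U x)) &
           (forall x, Dx x -> S x = Tx x + U x)]) /\
  (* minimality of the norm *)
  (forall (S : V2 -> V1),
     is_adjoint ip1 ip2 D T (adj_dom ip1 ip2 D T) S ->
     forall x, Dx x -> vnorm ip1 (Tx x) <= vnorm ip1 (S x)).
Proof.
move=> [Hip1 Hc1] [Hip2 _] HD HT Dx Tx.
have [D0 DL] := HD.
have Spec k : Dx k -> vclosure ip1 D (Tx k) /\ forall h, D h -> ip2 (T h) k = ip1 h (Tx k).
  by move=> hk; apply: (epsilon_spec (inhabits 0) _ hk).
have Uniq y1 y2 : vclosure ip1 D y1 -> vclosure ip1 D y2 ->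
    (forall h, D h -> ip1 h y1 = ip1 h y2) -> y1 = y2.
  move=> c1 c2 e.
  have cw : vclosure ip1 D (y1 - y2).
    rewrite addrC -scaleN1r; case: (cl_lin Hip1 HD) => _; apply => //.
  apply/eqP; rewrite -subr_eq0; apply/eqP; apply: (ip_eq0 Hip1).
  apply: (orth_cl Hip1 _ cw) => h Dh.
  by rewrite (ipBr Hip1) e // subrr.
have Char k y : Dx k -> vclosure ip1 D y -> (forall h, D h -> ip2 (T h) k = ip1 h y) -> Tx k = y.
  move=> hk cy hy; have [c1 e1] := Spec k hk.
  by apply: Uniq => // h Dh; rewrite -e1 // hy.
have TD x y : D x -> D y -> T (x + y) = T x + T y.
  by move=> Dx0 Dy0; rewrite -{1}(scale1r x) HT // scale1r.
have E1 : Dx = adj_dom ip1 ip2 D T.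
  apply: functional_extensionality => k; apply: propositional_extensionality; split.
    move=> [y [cy hy]]; exists (vnorm ip1 y) => h Dh.
    by rewrite hy // mulrC; apply: CS.
  move=> [M hM].
  have [y [cy hy]] := riesz Hip1 Hc1 (f := fun h => ip2 (T h) k) HD
    (fun a x y Dx0 Dy0 => ltac:(by rewrite /= HT // (ipDl Hip2) (ipZl Hip2))) hM.
  by exists y; split.
have Dx_lin : linear_subspace Dx.
  split.
    exists 0; split; first exact: cl_sub.
    by move=> h Dh; rewrite (ip0r Hip2) (ip0r Hip1).
  move=> a k1 k2 [y1 [c1 h1]] [y2 [c2 h2]].
  exists (a *: y1 + y2); split; first by case: (cl_lin Hip1 HD) => _; apply.
  by move=> h Dh; rewrite (ipDr Hip2) (ipZr Hip2) (ipDr Hip1) (ipZr Hip1) h1 ?h2.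
have Tx_lin : linear_on Dx Tx.
  move=> a k1 k2 hk1 hk2.
  have [c1 e1] := Spec k1 hk1; have [c2 e2] := Spec k2 hk2.
  apply: Char.
  - by case: Dx_lin => _; apply.
  - by case: (cl_lin Hip1 HD) => _; apply.
  - by move=> h Dh; rewrite (ipDr Hip2) (ipZr Hip2) (ipDr Hip1) (ipZr Hip1) e1 ?e2.
have Adj : is_adjoint ip1 ip2 D T Dx Tx.
  split => // h k Dh hk; by case: (Spec k hk) => _; apply.
have Part4 : forall S : V2 -> V1,
     is_adjoint ip1 ip2 D T (adj_dom ip1 ip2 D T) S <->
     exists U : V2 -> V1,
       [/\ linear_on Dx U,
           (forall x, Dx x -> orth ip1 (vclosure ip1 D) (U x)) &
           (forall x, Dx x -> S x = Tx x + U x)].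
  move=> S; rewrite -E1; split.
    move=> [_ hS eS]; exists (fun x => S x - Tx x); split.
    - move=> a x y hx hy; rewrite hS // Tx_lin // scalerBr.
      by rewrite opprD addrACA.
    - move=> x hx y cy; apply: (orth_cl Hip1 _ cy) => h Dh.
      by rewrite (ipBr Hip1) -eS // -(Spec x hx).2 // subrr.
    - by move=> x hx; rewrite addrC subrK.
  move=> [U [hU oU eU]]; split => //.
  - move=> a x y hx hy.
    rewrite eU; last by case: Dx_lin => _; apply.
    by rewrite Tx_lin // hU // !eU // scalerDr addrACA.
  - move=> h k Dh hk.
    rewrite eU // (ipDr Hip1) -(Spec k hk).2 //.
    by rewrite (oU k hk h (cl_sub Hip1 Dh)) addr0.
have Closed : closed_op ip2 ip1 Dx Tx.
  move=> u x y hu cux cuy.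
  have cy : vclosure ip1 D y.
    apply: (cl_closed Hip1); exists (fun n => Tx (u n)); split => //.
    by move=> n; case: (Spec _ (hu n)).
  have hxy h : D h -> ip2 (T h) x = ip1 h y.
    move=> Dh; apply: (@climit_unique _ (fun n => ip2 (T h) (u n))).
    - exact: (cvg_ipr Hip2 (T h) cux).
    - move=> e e0; have [N hN] := cvg_ipr Hip1 h cuy e0.
      by exists N => n hn; rewrite (Spec _ (hu n)).2 //; apply: hN.
  have hx : Dx x by exists y.
  by split => //; apply: Char.
split => //; split => //; split => //; split => //.
move=> S hS x hx.
have [U [_ oU eU]] := (Part4 S).1 hS.
rewrite eU // /vnorm ler_sqrtC ?nnegrE ?(ip_ge0 Hip1) //.
have o1 : ip1 (Tx x) (U x) = 0 by apply: (oU x hx (Tx x) (Spec x hx).1).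
have o2 : ip1 (U x) (Tx x) = 0 by rewrite (ipC Hip1) o1 conjC0.
rewrite (ipDl Hip1) !(ipDr Hip1) o1 o2 addr0 add0r.
by rewrite lerDl (ip_ge0 Hip1).
Qed.
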